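(* Let $n\ge1$ and $0\le k\le n-1$. In $\mathbb Q[\lambda_1,\dots,\lambda_n]$, $$\sum_{i=1}^n \lambda_i^k\,\frac{\partial^k}{\partial\lambda_i^k}V(\lambda_1,\dots,\lambda_n) \;=\; k!\binom{n}{k+1}\,V(\lambda_1,\dots,\lambda_n),$$ where $V(\lambda_1,\dots,\lambda_n)=\prod_{1\le i<j\le n}(\lambda_j-\lambda_i)$.
   Context: $\lambda_1,\dots,\lambda_n$ are independent indeterminates. *)

(* Defs.v *)
From HB Require Import structures.
From mathcomp Require Import all_boot all_order all_algebra.
Unset Strict Implicit. Unset Printing Implicit Defensive.
Import Order.TTheory GRing.Theory Num.Theory.
Local Open Scope ring_scope.

(* mpoly n = Q[l_0, ..., l_{n-1}] (0-based indices); the outermost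
   variable of mpoly n.+1 = {poly mpoly n} is l_n. *)
Fixpoint mpoly (n : nat) : comNzRingType :=
  match n with
  | 0 => rat
  | n'.+1 => ({poly mpoly n'} : comNzRingType)
  end.

(* the variable l_i of mpoly n (meaningful for i < n) *)
Fixpoint mvar (n : nat) (i : nat) {struct n} : mpoly n :=
  match n return mpoly n with
  | 0 => 0
  | n'.+1 => if i == n' then ('X : {poly mpoly n'}) else (@mvar n' i)%:P
  end.

Fixpoint mderiv (n : nat) (i : nat) {struct n} : mpoly n -> mpoly n :=
  match n return mpoly n -> mpoly n with
  | 0 => fun _ => 0
  | n'.+1 => fun p : {poly mpoly n'} =>
      if i == n' then deriv p else map_poly (@mderiv n' i) p
  end.

Definition vandermonde (n : nat) : mpoly n :=
  \prod_(i < n) \prod_(j < n | (i < j)%N) (mvar n j - mvar n i).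

(* Main.v *)
Require Import Defs.
From HB Require Import structures.
From mathcomp Require Import all_boot all_order all_algebra.
From mathcomp Require Import fingroup perm.
Import GRing.Theory.
Local Open Scope ring_scope.

Lemma mderiv0 n i : mderiv n i 0 = 0.
Proof.
elim: n => [//|n IH] /=; case: ifP => _; first exact: deriv0.
exact: map_poly0.
Qed.

Lemma mderivB n i : {morph mderiv n i : x y / x - y}.
Proof.
elim: n => [x y|n IH x y] /=; first by rewrite subr0.
case: ifP => _; first exact: derivB.
apply/polyP => m; rewrite coefB !coef_map_id0 ?mderiv0 //.
by rewrite coefB IH.
Qed.

HB.instance Definition _ n i :=
  GRing.isZmodMorphism.Build (mpoly n) (mpoly n) (mderiv n i) (mderivB n i).

Lemma mderivM n i p q :
  mderiv n i (p * q) = mderiv n i p * q + p * mderiv n i q.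
Proof.
elim: n p q => [p q|n IH p q] /=; first by rewrite mul0r mulr0 addr0.
case: ifP => _; first exact: derivM.
apply/polyP => m; rewrite coefD !coef_map_id0 ?mderiv0 // !coefM.
rewrite raddf_sum -big_split /=; apply: eq_bigr => j _.
by rewrite IH !coef_map_id0 ?mderiv0.
Qed.

Lemma mderiv1 n i : mderiv n i 1 = 0.
Proof.
have := mderivM n i 1 1; rewrite !mul1r mulr1 => H.
by apply: (addrI (mderiv n i 1)); rewrite addr0 -H.
Qed.

Lemma mderiv_var n i l : (i < n)%N -> (l < n)%N ->
  mderiv n i (mvar n l) = (i == l)%:R.
Proof.
elim: n => [//|n IH] /= Hi Hl.
case: (eqVneq i n) => [Hin|Hin].
  subst i; case: (eqVneq l n) => [Hln|Hln]; first by rewrite derivX.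
  by rewrite derivC.
case: (eqVneq l n) => [Hln|Hln].
  rewrite Hln (negbTE Hin); apply/polyP => m.
  rewrite coef_map_id0 ?mderiv0 // coefX coef0.
  by case: (m == 1%N); rewrite ?mderiv1 ?mderiv0.
have Hi' : (i < n)%N by rewrite ltn_neqAle Hin -ltnS.
have Hl' : (l < n)%N by rewrite ltn_neqAle Hln -ltnS.
apply/polyP => m; rewrite coef_map_id0 ?mderiv0 // coefC -polyC_natr coefC.
by case: (m == 0%N); rewrite ?mulr0n ?mderiv0 // IH.
Qed.

Section D.
Variables (n i : nat).
Local Notation T := (mderiv n i).

Lemma mderivMc c p : T c = 0 -> T (c * p) = c * T p.
Proof. by move=> Hc; rewrite mderivM Hc mul0r add0r. Qed.

Lemma mderivX x m : T x = 1 -> T (x ^+ m) = m%:R * x ^+ m.-1.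
Proof.
move=> Hx; elim: m => [|m IH]; first by rewrite expr0 mderiv1 mul0r.
rewrite exprS mderivM Hx IH mul1r mulrCA -exprS.
case: m {IH} => [|m] /=; first by rewrite !mul0r expr0 addr0 !mulr1.
by rewrite [in RHS]mulrSr mulrDl mul1r addrC.
Qed.

Lemma iter_mderivXc x c e k : T x = 1 -> T c = 0 ->
  iter k T (x ^+ e * c) = (e ^_ k)%:R * (x ^+ (e - k) * c).
Proof.
move=> Hx Hc; elim: k => [|k IH]; first by rewrite subn0 mul1r.
rewrite iterS IH mderivMc; last by rewrite raddfMn /= mderiv1 mul0rn.
by rewrite mderivM Hc mulr0 addr0 mderivX // ffactnSr natrM -!mulrA subnS.
Qed.

Lemma mderiv_prod0 (I : Type) (r : seq I) (P : pred I) (F : I -> mpoly n) :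
  (forall j, P j -> T (F j) = 0) -> T (\prod_(j <- r | P j) F j) = 0.
Proof.
move=> H; apply: (big_ind (fun p => T p = 0)) => //; first exact: mderiv1.
by move=> a b Ha Hb; rewrite mderivM Ha Hb mul0r mulr0 addr0.
Qed.

End D.

Lemma mderivX0 n i x m : mderiv n i x = 0 -> mderiv n i (x ^+ m) = 0.
Proof.
move=> Hx; elim: m => [|m IH]; first by rewrite expr0 mderiv1.
by rewrite exprS mderivM Hx IH mul0r mulr0 addr0.
Qed.

Lemma iter_sum n i k (I : Type) (r : seq I) (P : pred I) (F : I -> mpoly n) :
  iter k (mderiv n i) (\sum_(j <- r | P j) F j) =
  \sum_(j <- r | P j) iter k (mderiv n i) (F j).
Proof.
elim: k => [//|k IH]; by rewrite iterS IH raddf_sum.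
Qed.

Lemma iter_Mc n i k c p : mderiv n i c = 0 ->
  iter k (mderiv n i) (c * p) = c * iter k (mderiv n i) p.
Proof.
move=> Hc; elim: k => [//|k IH]; by rewrite !iterS IH mderivMc.
Qed.

Lemma mono_step n k (e : 'I_n -> nat) (i : 'I_n) :
  mvar n i ^+ k * iter k (mderiv n i) (\prod_(j < n) mvar n j ^+ e j)
  = ((e i) ^_ k)%:R * \prod_(j < n) mvar n j ^+ e j.
Proof.
rewrite (bigD1 i) //= iter_mderivXc.
- rewrite mulrCA; case: (leqP k (e i)) => Hk.
    by congr (_ * _); rewrite mulrA -exprD subnKC.
  by rewrite ffact_small // !mul0r.
- by rewrite mderiv_var // eqxx.
apply: mderiv_prod0 => j Hj; apply: mderivX0.
by rewrite mderiv_var // eq_sym (negbTE (Hj : (j:nat) != i)).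
Qed.

Lemma hockey n k : (\sum_(i < n) i ^_ k = k`! * 'C(n, k.+1))%N.
Proof.
elim: n => [|n IH]; first by rewrite big_ord0 bin0n muln0.
by rewrite big_ord_recr /= IH binS mulnDr -bin_ffact [X in (_ + X)%N]mulnC.
Qed.

Lemma vander_det n :
  vandermonde n = \sum_(s : 'S_n) (-1) ^+ s * \prod_(j < n) mvar n j ^+ s j.
Proof.
have := det_Vandermonde (\row_(j < n) mvar n j).
under eq_bigr do under eq_bigr do rewrite !mxE.
rewrite /vandermonde => <-; rewrite -det_tr /determinant.
apply: eq_bigr => s _; congr (_ * _); apply: eq_bigr => j _.
by rewrite !mxE.
Qed.

Theorem mainTheorem16 (n k : nat) (hn : (1 <= n)%N) (hk : (k <= n - 1)%N) :
  \sum_(i < n) mvar n i ^+ k * iter k (mderiv n i) (vandermonde n)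
  = (k`! * 'C(n, k.+1))%:R * vandermonde n.
Proof.
rewrite vander_det mulr_sumr.
under eq_bigr do rewrite iter_sum mulr_sumr.
rewrite exchange_big /=; apply: eq_bigr => s _.
under eq_bigr => i _.
  rewrite iter_Mc; last first.
    by apply: mderivX0; rewrite raddfN /= mderiv1 oppr0.
  rewrite mulrCA mono_step.
  over.
rewrite (_ : \sum_(i < n) _ = (-1) ^+ s * \sum_(i < n)
   ((s i ^_ k)%:R * \prod_(j < n) mvar n j ^+ s j)); last first.
  by rewrite mulr_sumr.
rewrite mulrCA; congr (_ * _).
rewrite -mulr_suml -natr_sum -hockey; congr (_%:R * _).
by rewrite [RHS](reindex_inj (@perm_inj _ s)).
Qed.
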